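(* Let $g$ and $k$ be positive integers, let $G=(A,B;E)$ be a bipartite graph with girth at least $2g$, and let $H$ be a bipartite graph with vertex classes $A$ and $[k]$. Suppose that $H$ contains no cycle $u_1,\ell_1,\dots,u_h,\ell_h$ with $u_1,\dots,u_h\in A$, $\ell_1,\dots,\ell_h\in[k]$ for some $h<g$ such that $u_1,\dots,u_h$ have a common neighbor in $G$. Then $G\otimes_H k$ has girth at least $2g$.
   Context: For a bipartite graph $G=(A,B;E)$ and positive integer $k$, $G\otimes k$ is the bipartite graph with vertex classes $A\times[k]$ and $(B\times[k])\cup A'$, where $A'$ is a disjoint copy of $A$; $(u,i)\in A\times[k]$ and $(v,j)\in B\times[k]$ are adjacent iff $i=j$ and $\{u,v\}\in E$; $(u,i)\in A\times[k]$ and $v\in A'$ are adjacent iff $v$ is the copy of $u$; there are no other edges. For a bipartite graph $H$ with vertex classes $A$ and $[k]$, $G\otimes_H k$ is the induced subgraph of $G\otimes k$ obtained by keeping all vertices of $(B\times[k])\cup A'$ and only those vertices $(u,i)\in A\times[k]$ with $\{u,i\}\in E(H)$. The girth of a graph is the length of its shortest cycle. *)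

(* Defs.v *)
From mathcomp Require Import all_boot.
Set Implicit Arguments. Unset Strict Implicit. Unset Printing Implicit Defensive.

Definition is_cycle (V : eqType) (adj : rel V) (c : seq V) : bool :=
  [&& 3 <= size c, uniq c & cycle adj c].

Definition girth_ge (V : eqType) (adj : rel V) (m : nat) : Prop :=
  forall c : seq V, is_cycle adj c -> m <= size c.

Definition bip_adj (X Y : Type) (E : X -> Y -> bool) : rel (X + Y) :=
  fun x y => match x, y with
             | inl a, inr b => E a b
             | inr b, inl a => E a b
             | _, _ => false
             end.

(* Vertex set of G (x) k : A x [k]  and  (B x [k]) U A'. *)
Definition tvert (A B : finType) (k : nat) : finType :=
  ((A * 'I_k) + ((B * 'I_k) + A))%type.

Definition tensor_adj (A B : finType) (E : A -> B -> bool) (k : nat)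
  : rel (tvert A B k) :=
  fun x y => match x, y with
             | inl (u, i), inr (inl (v, j)) => (i == j) && E u v
             | inr (inl (v, j)), inl (u, i) => (i == j) && E u v
             | inl (u, _), inr (inr w) => u == w
             | inr (inr w), inl (u, _) => u == w
             | _, _ => false
             end.

Definition tkeep (A B : finType) (k : nat) (H : A -> 'I_k -> bool)
  (x : tvert A B k) : bool :=
  match x with
  | inl (u, i) => H u i
  | inr _ => true
  end.

Definition tensorH_adj (A B : finType) (E : A -> B -> bool) (k : nat)
  (H : A -> 'I_k -> bool) : rel {x : tvert A B k | tkeep H x} :=
  fun x y => tensor_adj E (val x) (val y).

Definition leftverts (X Y : Type) (c : seq (X + Y)) : seq X :=
  pmap (fun z => match z with inl a => Some a | inr _ => None end) c.

(* Main.v *)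
Require Import Defs.
From Stdlib Require Import Classical_Prop.
From mathcomp Require Import all_boot zify.
Set Implicit Arguments. Unset Strict Implicit. Unset Printing Implicit Defensive.
Lemma cycle_nth (T : Type) (r : rel T) (c : seq T) (x0 : T) :
  cycle r c <-> (forall i, i < size c -> r (nth x0 c i) (nth x0 c (i.+1 %% size c))).
Proof.
case: c => [|x p]; first by split => // _ i.
rewrite /cycle; split.
- move/(pathP x0) => H i hi.
  have := H i; rewrite size_rcons => /(_ hi).
  rewrite -rcons_cons !nth_rcons hi /=.
  case: (ltngtP i (size p)) => [ip|ip|->].
  + by rewrite modn_small.
  + by move: hi; rewrite /= ltnS; lia.
  + by rewrite modnn.
- move=> H; apply/(pathP x0) => i; rewrite size_rcons => hi.
  have := H i hi; rewrite -rcons_cons !nth_rcons hi /=.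
  case: (ltngtP i (size p)) => [ip|ip|->].
  + by rewrite modn_small.
  + by move: hi; rewrite /= ltnS; lia.
  + by rewrite modnn.
Qed.
Lemma NB (V : eqType) (r : rel V) (F : nat -> V) :
  (forall x, ~~ r x x) -> (forall i, r (F i) (F i.+1)) -> (forall i, F i != F i.+2) ->
  forall d i0, 0 < d -> F i0 = F (i0 + d) -> exists c, is_cycle r c /\ size c <= d.
Proof.
move=> irr adj nb d; elim/ltn_ind: d => d IH i0 d0 Fd.
set c := mkseq (fun a => F (i0 + a)) d.
case: (boolP (uniq c)) => [uc|].
- exists c; rewrite size_mkseq; split => //.
  rewrite /is_cycle size_mkseq uc /=; apply/andP; split.
  + case: d d0 Fd {IH c uc} => [//|[|[|d]]] // _.
    * by rewrite addn1 => Fd; move: (adj i0); rewrite -Fd (negbTE (irr _)).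
    * by rewrite addn2 => Fd; move: (nb i0); rewrite -Fd eqxx.
  + apply/(cycle_nth _ _ (F i0)) => i; rewrite size_mkseq => hi.
    rewrite !nth_mkseq ?ltn_pmod //.
    case: (ltngtP i.+1 d) => [h|h|h].
    * by rewrite modn_small // addnS adj.
    * lia.
    * by rewrite h modnn addn0 Fd -h addnS adj.
- case/(uniqPn (F i0)) => a [b []]; rewrite size_mkseq => ab bd.
  rewrite !nth_mkseq ?(ltn_trans ab) // => Fab.
  have [c' [cc sc]] := IH (b - a) ltac:(lia) (i0 + a) ltac:(lia)
     ltac:(by rewrite Fab; congr F; lia).
  by exists c'; split => //; lia.
Qed.

Lemma nth_rot (T : Type) (x0 : T) (s : seq T) i j :
  i <= size s -> j < size s -> nth x0 (rot i s) j = nth x0 s ((i + j) %% size s).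
Proof.
move=> hi hj; rewrite /rot nth_cat size_drop; case: ltnP => h.
- by rewrite nth_drop modn_small //; lia.
- rewrite nth_take; last by lia.
  have -> : i + j = (i + j - size s) + size s by lia.
  rewrite modnDr modn_small; [congr nth; lia | lia].
Qed.

Lemma leftverts_perm (X Y : eqType) (s t : seq (X + Y)) :
  perm_eq s t -> perm_eq (leftverts s) (leftverts t).
Proof. exact: perm_pmap. Qed.

Lemma bip_irr (X Y : Type) (E : X -> Y -> bool) x : ~~ bip_adj E x x.
Proof. by case: x. Qed.

Lemma starS (A B : finType) (E : A -> B -> bool) (g : nat) :
  girth_ge (bip_adj E) (2 * g) ->
  forall w : seq (A + B), size w < 2 * g -> cycle (bip_adj E) w -> uniq (leftverts w) ->
  forall x y, inr x \in w -> inr y \in w -> x = y.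
Proof.
move=> gir w; have [n le] := ubnP (size w); elim: n w le => [//|n IH] w le.
move=> wg cw uw x y xw yw.
case: (ltnP (size w) 3) => [small|big].
  case: w small le wg cw uw xw yw => [|z1 [|z2 [|z3 w']]] //= _ _ _.
  - by rewrite andbT (negbTE (bip_irr _ _)).
  - rewrite !inE andbT => /andP [e12 _] _.
    case/orP => /eqP ex; case/orP => /eqP ey; subst;
      by [case: ey | move: e12].
set L := size w.
pose F i := nth (inr x) w (i %% L).
have Fadj : forall i, bip_adj E (F i) (F i.+1).
  move=> i; have := (cycle_nth _ w (inr x)).1 cw (i %% L) ltac:(rewrite ltn_pmod //; lia).
  by rewrite /F -addn1 modnDml addn1.
case: (Classical_Prop.classic (exists i, F i = F i.+2)) => [[i Fi]|noB].
- set i0 := i %% L.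
  have hrot j : j < L -> nth (inr x) (rot i0 w) j = F (i + j).
    by move=> jL; rewrite nth_rot ?modnDml // ltnW // ltn_pmod //; lia.
  have sw' : size (rot i0 w) = L by rewrite size_rot.
  have cw' : cycle (bip_adj E) (rot i0 w) by rewrite rot_cycle.
  have uw' : uniq (leftverts (rot i0 w)).
    have pr : perm_eq (rot i0 w) w by rewrite perm_rot.
    by rewrite (perm_uniq (leftverts_perm pr)).
  have xw' : inr x \in rot i0 w by rewrite mem_rot.
  have yw' : inr y \in rot i0 w by rewrite mem_rot.
  have h0 := hrot 0 ltac:(lia); have h2 := hrot 2 ltac:(lia).
  rewrite addn0 in h0; rewrite addn2 -Fi -h0 in h2.
  have big' : 2 < size (rot i0 w) by rewrite sw'.
  move: sw' big' cw' uw' xw' yw' h2.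
  case: (rot i0 w) => [|a [|b [|c rest]]] //= sw' _.
  move=> /andP [ab /andP [bc cr]] uw' xw' yw' ca; subst a.
  case: c ab bc cr uw' xw' yw' => [u|b0] ab bc cr uw'.
  + by move: uw'; case: b ab bc => //= b' _ _; rewrite inE eqxx.
  + case: b ab bc uw' => [u|b'] // ab bc uw'.
    have sub z : z \in [:: inr b0, inl u, inr b0 & rest] -> z != inl u ->
        z \in inr b0 :: rest.
      by rewrite !inE => /or3P [->|->|->] //; rewrite ?orbT // eqxx.
    move=> xw' yw'.
    apply: (IH (inr b0 :: rest)) => //=.
    * by move: le; rewrite -/L -sw' /=; lia.
    * by rewrite -/L -sw' in wg; simpl in wg; lia.
    * by move: uw' => /= /andP [].
    * exact: sub.
    * exact: sub.
- have [c [cc sc]] := NB (bip_irr E) Fadj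
      ltac:(by move=> i; apply/eqP => h; apply: noB; exists i)
      (d := L) (i0 := 0) ltac:(lia) ltac:(by rewrite /F modnn mod0n).
  have := gir c cc; lia.
Qed.

Definition projG (A B : Type) (k : nat) (z : A + (B * 'I_k)) : A + B :=
  match z with inl u => inl u | inr bj => inr bj.1 end.
Definition projH (A B : Type) (k : nat) (z : A + (B * 'I_k)) : A + 'I_k :=
  match z with inl u => inl u | inr bj => inr bj.2 end.

Lemma leftverts_projG (A B : Type) k (c : seq (A + (B * 'I_k))) :
  leftverts (map (@projG A B k) c) = leftverts c.
Proof. by elim: c => //= [[u|y] c IH] /=; rewrite IH. Qed.
Lemma leftverts_projH (A B : Type) k (c : seq (A + (B * 'I_k))) :
  leftverts (map (@projH A B k) c) = leftverts c.
Proof. by elim: c => //= [[u|y] c IH] /=; rewrite IH. Qed.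

Lemma leftverts_uniq (X Y : eqType) (c : seq (X + Y)) : uniq c -> uniq (leftverts c).
Proof. by apply: (pmap_uniq (g := inl)) => [[]]. Qed.

Lemma mem_leftverts (X Y : eqType) (c : seq (X + Y)) u : u \in leftverts c -> inl u \in c.
Proof.
elim: c => //= [[a|y] c IH]; rewrite ?inE /=.
- by case/orP => [/eqP ->|/IH ->]; rewrite ?eqxx ?orbT.
- by move/IH.
Qed.

Lemma final (g k : nat) (A B : finType) (E : A -> B -> bool) (H : A -> 'I_k -> bool) :
  girth_ge (bip_adj E) (2 * g) ->
  (forall c : seq (A + 'I_k), is_cycle (bip_adj H) c -> size c < 2 * g ->
     ~ (exists b : B, forall u, u \in leftverts c -> E u b)) ->
  forall c : seq (A + (B * 'I_k)),
    is_cycle (bip_adj (fun u bj => E u bj.1 && H u bj.2)) c -> size c < 2 * g -> False.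
Proof.
move=> gir hyp c /and3P [c3 uc cc] sc.
set w := map (@projG A B k) c.
have allB : forall x y, inr x \in w -> inr y \in w -> x = y.
  apply: (starS gir); rewrite ?size_map //.
  - rewrite /w cycle_map; apply: sub_cycle cc => [[u|[v j]] [u'|[v' j']]] //=;
    by case/andP.
  - by rewrite /w leftverts_projG; apply: leftverts_uniq.
have [bj bjc] : exists bj, inr bj \in c.
  case: c c3 uc cc {sc w allB} => [//|z c] _ _ cc.
  have zc : z \in z :: c by rewrite inE eqxx.
  case: z cc zc => [u|bj] cc zc; last by exists bj.
  have := next_cycle cc zc; have := mem_next (inl u :: c) (inl u); rewrite zc.
  by case: (next _ _) => [u'|bj] // nc _; exists bj.
apply: (hyp (map (@projH A B k) c)).
- rewrite /is_cycle size_map c3 /=; apply/andP; split.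
  + rewrite map_inj_in_uniq // => [[u|[v j]] [u'|[v' j']]] //= xc yc.
    * by case=> ->.
    * case=> ejj; congr inr; congr pair => //.
      by apply: allB; apply/mapP; [exists (inr (v, j)) | exists (inr (v', j'))].
  + rewrite cycle_map; apply: sub_cycle cc => [[u|[v j]] [u'|[v' j']]] //=;
      by case/andP.
- by rewrite size_map.
- exists bj.1 => u; rewrite leftverts_projH => /mem_leftverts uc'.
  have := next_cycle cc uc'; have := mem_next c (inl u); rewrite uc'.
  case: (next c (inl u)) => [//|[v j]] nc /= /andP [Euv _].
  suff -> : bj.1 = v by [].
  by apply: allB; apply/mapP; [exists (inr bj) | exists (inr (v, j))].
Qed.

Definition isB (A B : finType) k (x : tvert A B k) : bool :=
  if x is inr (inl _) then true else false.
Definition getA (A B : finType) k (a0 : A) (x : tvert A B k) : A :=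
  match x with inl (u, _) => u | inr (inr w) => w | inr (inl _) => a0 end.
Definition getBJ (A B : finType) k (bj0 : B * 'I_k) (x : tvert A B k) : B * 'I_k :=
  match x with inr (inl p) => p | _ => bj0 end.

Lemma diff2 (T : Type) (f : nat -> T) n :
  2 < n -> (forall i j, f i = f j -> i %% n = j %% n) -> forall a, f a = f a.+2 -> False.
Proof.
move=> n3 inj a /inj /eqP.
by rewrite -addn2 -{1}[a]addn0 eqn_modDl mod0n modn_small.
Qed.

Lemma stepB (A B : finType) k (E : A -> B -> bool) (H : A -> 'I_k -> bool) n
  (f : nat -> tvert A B k) :
  2 < n -> (forall i, tensor_adj E (f i) (f i.+1)) -> (forall i, tkeep H (f i)) ->
  (forall i j, f i = f j -> i %% n = j %% n) ->
  forall p, isB (f p) ->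
  exists u v j v' j' d, [/\ (d = 2 \/ d = 4), isB (f p.+2) = (d == 2),
     f p = inr (inl (v,j)), f p.+1 = inl (u,j) &
     [/\ f (p + d).-1 = inl (u,j'), f (p + d) = inr (inl (v',j')),
     (v,j) != (v',j'), E u v && H u j & E u v' && H u j' ] ].
Proof.
move=> n3 adj keep inj p.
have d2 := diff2 n3 inj.
case Efp: (f p) => [[u0 i0]|[[v j]|w]] // _.
have a1 := adj p; rewrite Efp in a1.
case Ef1: (f p.+1) a1 => [[u i]|[[v1 j1]|w1]] //= /andP [/eqP eij Euv]; subst i.
have k1 := keep p.+1; rewrite Ef1 /= in k1.
have a2 := adj p.+1; rewrite Ef1 in a2.
case Ef2: (f p.+2) a2 => [[u2 i2]|[[v2 j2]|w2]] //= a2.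
- case/andP: a2 => /eqP ej Euv2; subst j2.
  have k2 := keep p.+2.
  exists u, v, j, v2, j, 2; split => //; [by left | ].
  rewrite addn2 /= Ef1 Ef2; split => //; rewrite ?Euv ?k1 ?Euv2 //.
  by apply/eqP => evv; apply: (d2 p); rewrite Efp Ef2 evv.
- move/eqP: a2 => ew; subst w2.
  have a3 := adj p.+2; rewrite Ef2 in a3.
  case Ef3: (f p.+3) a3 => [[u3 i3]|[[v3 j3]|w3]] //= /eqP e3; subst u3.
  have k3 := keep p.+3; rewrite Ef3 /= in k3.
  have a4 := adj p.+3; rewrite Ef3 in a4.
  case Ef4: (f p.+4) a4 => [[u4 i4]|[[v4 j4]|w4]] //= a4.
  + case/andP: a4 => /eqP ej Euv4; subst j4.
    exists u, v, j, v4, i3, 4; split => //; [by right | ].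
    rewrite addn4 /= Ef3 Ef4; split => //; rewrite ?Euv ?k1 ?Euv4 ?k3 //.
    apply/eqP => -[_ eji]; subst i3.
    by apply: (d2 p.+1); rewrite Ef1 Ef3.
  + move/eqP: a4 => ew; subst w4.
    by exfalso; apply: (d2 p.+2); rewrite Ef2 Ef4.
Qed.

Lemma by_parity (P : nat -> Prop) :
  (forall t, P t.*2) -> (forall t, P t.*2.+1) -> forall i, P i.
Proof.
move=> h0 h1 i; rewrite -(odd_double_half i); case: (odd i) => /=.
- by rewrite add1n; apply: h1.
- by rewrite add0n; apply: h0.
Qed.

Lemma core (A B : finType) k (E : A -> B -> bool) (H : A -> 'I_k -> bool) n
  (f : nat -> tvert A B k) :
  2 < n -> (forall i, tensor_adj E (f i) (f i.+1)) -> (forall i, tkeep H (f i)) ->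
  (forall i j, f i = f j -> i %% n = j %% n) -> f n = f 0 -> isB (f 0) ->
  exists c : seq (A + (B * 'I_k)),
    is_cycle (bip_adj (fun u bj => E u bj.1 && H u bj.2)) c /\ size c <= n.
Proof.
move=> n3 adj keep inj fn fB.
have st := stepB n3 adj keep inj.
have d2 := diff2 n3 inj.
pose nb p := if isB (f p.+2) then p.+2 else p.+4.
pose pos t := iter t nb 0.
have posS t : pos t.+1 = nb (pos t) by [].
have nbd p d : d = 2 \/ d = 4 -> isB (f p.+2) = (d == 2) -> nb p = p + d.
  by move=> [] -> hB; rewrite /nb hB ?addn2 ?addn4.
have posB : forall t, isB (f (pos t)).
  elim => [//|t IH].
  have [u [v [j [v' [j' [d [hd hB fp fp1 [fd1 fd _ _ _]]]]]]]] := st _ IH.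
  by rewrite posS (nbd _ d hd hB) fd.
have stp t : exists u v j v' j' d, [/\ (d = 2 \/ d = 4), pos t.+1 = pos t + d,
     f (pos t) = inr (inl (v,j)), f (pos t).+1 = inl (u,j) &
     [/\ f (pos t + d).-1 = inl (u,j'), f (pos t + d) = inr (inl (v',j')),
     (v,j) != (v',j'), E u v && H u j & E u v' && H u j' ] /\
     (forall x, pos t < x < pos t.+1 -> ~~ isB (f x))].
  have [u [v [j [v' [j' [d [hd hB fp fp1 [fd1 fd hne h1 h2]]]]]]]] := st _ (posB t).
  have pd := nbd _ d hd hB; rewrite -posS in pd.
  exists u, v, j, v', j', d; split => //; split; first by [].
  move=> x; rewrite pd => /andP [lx xl].
  case: hd => ?; subst d.
  - have -> : x = (pos t).+1 by lia.
    by rewrite fp1.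
  - have : x = (pos t).+1 \/ x = (pos t).+2 \/ x = (pos t + 4).-1 by lia.
    by case => [->|[->|->]]; rewrite ?fp1 ?hB ?fd1.
have pos2 t : t.*2 <= pos t.
  elim: t => [//|t IH]; have [u [v [j [v' [j' [d [hd pd _ _ _]]]]]]] := stp t.
  by rewrite doubleS pd; case: hd => ->; lia.
have posI x : exists t, pos t <= x < pos t.+1.
  elim: x => [|x IHx].
    exists 0; apply/andP; split; first by [].
    by have := pos2 1; rewrite -/(pos 1); lia.
  case: IHx => t /andP [lx xl].
  case: (ltnP x.+1 (pos t.+1)) => h.
    by exists t; apply/andP; split => //; lia.
  exists t.+1; apply/andP; split; first by lia.
  have [u [v [j [v' [j' [d [hd pd _ _ _]]]]]]] := stp t.+1.
  by rewrite pd; case: hd => ->; lia.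
have [m /andP [pm1 pm2]] := posI n.
have pmn : pos m = n.
  case: (ltnP (pos m) n) => h; last by lia.
  have [u [v [j [v' [j' [d [hd pd _ _ [_ nB]]]]]]]] := stp m.
  by move: (nB n); rewrite h pm2 fn fB => /(_ isT).
have m0 : 0 < m by case: m pmn {pm1 pm2} => //= h; lia.
have [a0 _] : exists a : A, True.
  have [u [v [j [v' [j' [d [hd pd _ fp1 _]]]]]]] := stp 0; by exists u.
have [bj0 _] : exists bj : B * 'I_k, True.
  have [u [v [j [v' [j' [d [hd pd fp _ _]]]]]]] := stp 0; by exists (v, j).
pose h i : A + (B * 'I_k) := if odd i then inl (getA a0 (f (pos i./2).+1))
                             else inr (getBJ bj0 (f (pos i./2))).
have hE t : h t.*2 = inr (getBJ bj0 (f (pos t))) by rewrite /h odd_double doubleK.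
have hO t : h t.*2.+1 = inl (getA a0 (f (pos t).+1)).
  by rewrite /h /= odd_double /= uphalf_double.
set R := fun u bj => E u bj.1 && H u bj.2.
have hadj : forall i, bip_adj R (h i) (h i.+1).
  apply: by_parity => t; have [u [v [j [v' [j' [d [hd pd fp fp1 [[_ fd _ h1 h2] _]]]]]]]] := stp t.
  - by rewrite hE hO fp fp1.
  - by rewrite -doubleS hE hO fp1 pd fd.
have hnb : forall i, h i != h i.+2.
  apply: by_parity => t; have [u [v [j [v' [j' [d [hd pd fp fp1 [[fd1 fd hne _ _] _]]]]]]]] := stp t.
  - rewrite -doubleS !hE fp pd fd /=; apply/eqP => -[e1 e2].
    by move: hne; rewrite e1 e2 eqxx.
  - rewrite -[t.*2.+3]/((t.+1).*2.+1) !hO fp1.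
    have [u2 [v2 [j2 [v2' [j2' [d2' [hd2 pd2 fp2 fp12 _]]]]]]] := stp t.+1.
    rewrite fp12 /=; apply/eqP => -[eu]; subst u2.
    move: fp2; rewrite pd fd => -[ev ej]; subst v2 j2.
    have pp : 0 < pos t + d by case: hd => ->; lia.
    apply: (d2 (pos t + d).-1); rewrite fd1 prednK //.
    by rewrite -pd fp12.
have [c [cc sc]] := NB (@bip_irr _ _ R) hadj hnb (d := m.*2) (i0 := 0)
   ltac:(by rewrite double_gt0) ltac:(by rewrite add0n hE pmn fn).
exists c; split => //.
by apply: (leq_trans sc); rewrite -pmn pos2.
Qed.

Lemma someB (A B : finType) k (E : A -> B -> bool) n (f : nat -> tvert A B k) :
  2 < n -> (forall i, tensor_adj E (f i) (f i.+1)) ->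
  (forall i j, f i = f j -> i %% n = j %% n) -> exists s, isB (f s).
Proof.
move=> n3 adj inj; have d2 := diff2 n3 inj.
case E0: (f 0) => [[u i]|[[v j]|w]]; last 2 first.
- by exists 0; rewrite E0.
- have a1 := adj 0; rewrite E0 in a1.
  case E1: (f 1) a1 => [[u1 i1]|[[v1 j1]|w1]] //= /eqP ew; subst w.
  have a2 := adj 1; rewrite E1 in a2.
  case E2: (f 2) a2 => [[u2 i2]|[[v2 j2]|w2]] //= a2; first by exists 2; rewrite E2.
  move/eqP: a2 => ?; subst w2.
  by exfalso; apply: (d2 0); rewrite E0 E2.
- have a1 := adj 0; rewrite E0 in a1.
  case E1: (f 1) a1 => [[u1 i1]|[[v1 j1]|w1]] //= a1; first by exists 1; rewrite E1.
  move/eqP: a1 => ?; subst w1.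
  have a2 := adj 1; rewrite E1 in a2.
  case E2: (f 2) a2 => [[u2 i2]|[[v2 j2]|w2]] //= /eqP ?; subst u2.
  have a3 := adj 2; rewrite E2 in a3.
  case E3: (f 3) a3 => [[u3 i3]|[[v3 j3]|w3]] //= a3; first by exists 3; rewrite E3.
  move/eqP: a3 => ?; subst w3.
  by exfalso; apply: (d2 1); rewrite E1 E3.
Qed.

Unset Implicit Arguments.

Theorem lemma5p5 (g k : nat) (A B : finType) (E : A -> B -> bool)
    (H : A -> 'I_k -> bool) :
  0 < g -> 0 < k ->
  girth_ge (bip_adj E) (2 * g) ->
  (forall c : seq (A + 'I_k), is_cycle (bip_adj H) c -> size c < 2 * g ->
     ~ (exists b : B, forall u, u \in leftverts c -> E u b)) ->
  girth_ge (@tensorH_adj A B E k H) (2 * g).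
Proof.
move=> g0 k0 gir hyp C /and3P [C3 uC cC].
rewrite leqNgt; apply/negP => Cg.
set n := size C.
have [x0 _] : exists x0 : {x : tvert A B k | tkeep H x}, True.
  by case: C C3 {uC cC Cg n} => [//|z C] _; exists z.
pose f i := val (nth x0 C (i %% n)).
have adj : forall i, tensor_adj E (f i) (f i.+1).
  move=> i; have := (cycle_nth _ C x0).1 cC (i %% n) ltac:(rewrite ltn_pmod //; lia).
  by rewrite /f -addn1 modnDml addn1.
have keep : forall i, tkeep H (f i) by move=> i; exact: valP.
have inj : forall i j, f i = f j -> i %% n = j %% n.
  move=> i j /val_inj /eqP; rewrite nth_uniq ?ltn_pmod //; [by move/eqP | lia | lia].
have [s sB] := someB C3 adj inj.
pose f' i := f (i + s).
have adj' : forall i, tensor_adj E (f' i) (f' i.+1) by move=> i; rewrite /f' addSn.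
have keep' : forall i, tkeep H (f' i) by move=> i; exact: keep.
have inj' : forall i j, f' i = f' j -> i %% n = j %% n.
  by move=> i j /inj /eqP; rewrite eqn_modDr => /eqP.
have fn : f' n = f' 0 by rewrite /f' /f add0n modnDl.
have [c [cc sc]] := core C3 adj' keep' inj' fn sB.
by apply: (final gir hyp cc); lia.
Qed.
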